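(* Let $n\ge 1$ and $\tau\in\mathfrak S_n$, and write $\tau=\tau^a\,n\,\tau^b$ where $\tau^a$ and $\tau^b$ are the (possibly empty) factors before and after the entry $n$. Then $\tau\in\mathrm{Sort}_n(\mathrm{SC}_{\underline{12}3})$ if and only if all of the following hold: (1) every entry of $\tau^a$ is greater than every entry of $\tau^b$; (2) $\tau^a$ avoids the vincular pattern $3\underline{21}$ and the classical pattern $132$; (3) $\tau^b$ avoids the classical pattern $213$.
   Context: $\mathfrak S_n$ is the set of permutations of $\{1,\dots,n\}$. A vincular pattern is a permutation with some entries underlined; a sequence contains it if it has a subsequence with the same relative order in which entries corresponding to adjacent underlined entries occupy consecutive positions; classical patterns have no underlining. An occurrence of $\underline{12}3$ is $a_j a_{j+1} a_l$ with $l>j+1$ and $a_j<a_{j+1}<a_l$; an occurrence of $3\underline{21}$ is $a_i a_j a_{j+1}$ with $i<j$ and $a_{j+1}<a_j<a_i$. For a pattern $\sigma$, the map $\mathrm{SC}_\sigma$ acts on $\tau$: read entries left to right; when the next entry $x$ is read, if pushing $x$ yields a stack whose entries read top to bottom (stack adjacency = consecutive positions) avoid $\sigma$, push $x$; otherwise pop the top stack entry to the output and repeat. At the end pop all remaining entries; the output is $\mathrm{SC}_\sigma(\tau)$. West's stack-sorting map is $s=\mathrm{SC}_{21}$. $\mathrm{Sort}_n(\mathrm{SC}_\sigma)=\{\tau\in\mathfrak S_n : s(\mathrm{SC}_\sigma(\tau))=12\cdots n\}$. *)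

(* Defs.v *)
From mathcomp Require Import all_boot.
Set Implicit Arguments. Unset Strict Implicit. Unset Printing Implicit Defensive.

(* A (vincular) pattern is given by a word [p] (a permutation of 1..k, as a
   seq nat) and a predicate [adj] on positions: [adj i] means that entries
   i and i+1 of the pattern are underlined together, i.e. must occupy
   consecutive positions in an occurrence.  Classical patterns: adj = pred0. *)

Definition occurrence (p : seq nat) (adj : pred nat) (s : seq nat)
    (f : {ffun 'I_(size p) -> 'I_(size s)}) : bool :=
  [forall i : 'I_(size p), forall j : 'I_(size p),
     [&& (i < j) ==> (f i < f j),
         (nth 0 p i < nth 0 p j) == (nth 0 s (f i) < nth 0 s (f j)) &
         ((j == i.+1 :> nat) && adj i) ==> (f j == (f i).+1 :> nat)]].

Arguments occurrence : clear implicits.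

Definition contains (p : seq nat) (adj : pred nat) (s : seq nat) : bool :=
  [exists f, occurrence p adj s f].

Definition avoids p adj s := ~~ contains p adj s.

(* Push x onto the stack st (top = head of the list, stack read top to bottom
   is the list itself): while the pushed stack would contain the pattern,
   pop the top to the output. *)
Fixpoint push (cont : seq nat -> bool) (x : nat) (st out : seq nat)
    : seq nat * seq nat :=
  match st with
  | [::] => ([:: x], out)
  | y :: st' => if cont (x :: st) then push cont x st' (rcons out y)
                else (x :: st, out)
  end.

Definition SC (cont : seq nat -> bool) (tau : seq nat) : seq nat :=
  let: (st, out) := foldl (fun so x => push cont x so.1 so.2) ([::], [::]) tau in
  out ++ st.

Definition west_s (tau : seq nat) : seq nat := SC (contains [:: 2; 1] pred0) tau.

Definition SC_12_3 (tau : seq nat) : seq nat := SC (contains [:: 1; 2; 3] (pred1 0)) tau.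

Definition in_Sort_12_3 (n : nat) (tau : seq nat) : Prop :=
  perm_eq tau (iota 1 n) /\ west_s (SC_12_3 tau) = iota 1 n.

(* Main.v *)
Require Import Defs.
From mathcomp Require Import all_boot zify.
Set Implicit Arguments. Unset Strict Implicit. Unset Printing Implicit Defensive.


Definition cond3 (a b c : nat) (adj : pred nat) (s : seq nat) (i j k : nat) :=
  [&& (a < b) == (nth 0 s i < nth 0 s j), (b < a) == (nth 0 s j < nth 0 s i),
      (a < c) == (nth 0 s i < nth 0 s k), (c < a) == (nth 0 s k < nth 0 s i),
      (b < c) == (nth 0 s j < nth 0 s k), (c < b) == (nth 0 s k < nth 0 s j),
      adj 0 ==> (j == i.+1) & adj 1 ==> (k == j.+1)].

Lemma contains3P a b c adj s :
  contains [:: a; b; c] adj s <->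
  exists i j k, [/\ i < j, j < k, k < size s & cond3 a b c adj s i j k].
Proof.
split.
- case/existsP => f /forallP H.
  have o0 : 0 < 3 by []. have o1 : 1 < 3 by []. have o2 : 2 < 3 by [].
  have H01 := elimT forallP (H (Ordinal o0)) (Ordinal o1).
  have H10 := elimT forallP (H (Ordinal o1)) (Ordinal o0).
  have H02 := elimT forallP (H (Ordinal o0)) (Ordinal o2).
  have H20 := elimT forallP (H (Ordinal o2)) (Ordinal o0).
  have H12 := elimT forallP (H (Ordinal o1)) (Ordinal o2).
  have H21 := elimT forallP (H (Ordinal o2)) (Ordinal o1).
  move: H01 H10 H02 H20 H12 H21 => /= /and3P[h1 h2 h3] /andP[h4 _]
     /and3P[_ h5 _] /andP[h6 _] /and3P[h7 h8 h9] /andP[h10 _].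
  exists (f (Ordinal o0)), (f (Ordinal o1)), (f (Ordinal o2)).
  split; [exact h1|exact h7|exact: ltn_ord|].
  by rewrite /cond3 h2 h4 h5 h6 h8 h10 /= h3 h9.
- case=> i [j [k [hij hjk hk]]]; rewrite /cond3 => /and5P[e1 e2 e3 e4 /and4P[e5 e6 e7 e8]].
  have hj : j < size s by apply: ltn_trans hk.
  have hi : i < size s by apply: ltn_trans hj.
  apply/existsP.
  exists [ffun u : 'I_3 => nth (Ordinal hi) [:: Ordinal hi; Ordinal hj; Ordinal hk] u].
  apply/forallP => u; apply/forallP => v; rewrite !ffunE.
  case: u => [[|[|[|u]]] hu]; case: v => [[|[|[|v]]] hv] //=;
  rewrite ?ltnn ?eqxx ?e1 ?e2 ?e3 ?e4 ?e5 ?e6 //= ?hij ?hjk ?(ltn_trans hij hjk) //=;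
  try (by move: e7; case: (adj 0)); try (by move: e8; case: (adj 1)).
Qed.

Lemma contains2P a b adj s :
  contains [:: a; b] adj s <->
  exists i j, [/\ i < j, j < size s,
     (a < b) == (nth 0 s i < nth 0 s j), (b < a) == (nth 0 s j < nth 0 s i)
   & adj 0 ==> (j == i.+1)].
Proof.
split.
- case/existsP => f /forallP H.
  have o0 : 0 < 2 by []. have o1 : 1 < 2 by [].
  have H01 := elimT forallP (H (Ordinal o0)) (Ordinal o1).
  have H10 := elimT forallP (H (Ordinal o1)) (Ordinal o0).
  move: H01 H10 => /= /and3P[h1 h2 h3] /andP[h4 _].
  exists (f (Ordinal o0)), (f (Ordinal o1)).
  split; [exact h1|exact: ltn_ord|exact h2|exact h4|exact h3].
- case=> i [j [hij hj e1 e2 e3]].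
  have hi : i < size s by apply: ltn_trans hj.
  apply/existsP.
  exists [ffun u : 'I_2 => nth (Ordinal hi) [:: Ordinal hi; Ordinal hj] u].
  apply/forallP => u; apply/forallP => v; rewrite !ffunE.
  case: u => [[|[|u]] hu]; case: v => [[|[|v]] hv] //=;
  rewrite ?ltnn ?eqxx ?e1 ?e2 //= ?hij //=; by move: e3; case: (adj 0).
Qed.

Lemma c21P s : contains [:: 2; 1] pred0 s <->
  exists i j, [/\ i < j, j < size s & nth 0 s j < nth 0 s i].
Proof.
rewrite contains2P; split.
- case=> i [j [h1 h2 e1 e2 _]]; exists i, j; split => //; lia.
- case=> i [j [h1 h2 e1]]; exists i, j; split => //; lia.
Qed.

Lemma c123P s : contains [:: 1; 2; 3] (pred1 0) s <->
  exists i k, [/\ i.+1 < k, k < size s, nth 0 s i < nth 0 s i.+1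
                & nth 0 s i.+1 < nth 0 s k].
Proof.
rewrite contains3P; split.
- case=> i [j [k [h1 h2 h3]]]; rewrite /cond3 => /and5P[e1 e2 e3 e4 /and4P[e5 e6 e7 e8]]; move: e7 => /= /eqP e7.
  subst j; exists i, k; split => //; lia.
- case=> i [k [h1 h2 e1 e2]]; exists i, i.+1, k; split => //; rewrite /cond3 /=.
  rewrite eqxx; lia.
Qed.

Lemma c321P s : contains [:: 3; 2; 1] (pred1 1) s <->
  exists i j, [/\ i < j, j.+1 < size s, nth 0 s j.+1 < nth 0 s j
                & nth 0 s j < nth 0 s i].
Proof.
rewrite contains3P; split.
- case=> i [j [k [h1 h2 h3]]]; rewrite /cond3 => /and5P[e1 e2 e3 e4 /and4P[e5 e6 e7 e8]]; move: e8 => /= /eqP e8.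
  subst k; exists i, j; split => //; lia.
- case=> i [j [h1 h2 e1 e2]]; exists i, j, j.+1; split => //; rewrite /cond3 /=.
  rewrite eqxx; lia.
Qed.

Fixpoint has2 (Q : nat -> nat -> bool) (s : seq nat) : bool :=
  if s is x :: s' then has (Q x) s' || has2 Q s' else false.
Fixpoint has3 (P : nat -> nat -> nat -> bool) (s : seq nat) : bool :=
  if s is x :: s' then has2 (P x) s' || has3 P s' else false.

Lemma hasNP (Q : pred nat) s : has Q s <-> exists j, j < size s /\ Q (nth 0 s j).
Proof.
split.
- case/hasP => y ys qy; exists (index y s); rewrite index_mem nth_index //.
- case=> j [hj qj]; apply/hasP; exists (nth 0 s j) => //; exact: mem_nth.
Qed.

Lemma has2P Q s : has2 Q s <->
  exists i j, [/\ i < j, j < size s & Q (nth 0 s i) (nth 0 s j)].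
Proof.
elim: s => [|x s IH] /=; first by split=> // [[i [j [h1 h2]]]]; lia.
split.
- case/orP.
  + case/hasNP => j [hj q]; exists 0, j.+1; split => //.
  + case/IH => i [j [h1 h2 q]]; exists i.+1, j.+1; split => //.
- case=> [[|i]] [[|j] [h1 h2 q]] //.
  + by apply/orP; left; apply/hasNP; exists j.
  + by apply/orP; right; apply/IH; exists i, j.
Qed.

Lemma has3P P s : has3 P s <->
  exists i j k, [/\ i < j, j < k, k < size s & P (nth 0 s i) (nth 0 s j) (nth 0 s k)].
Proof.
elim: s => [|x s IH] /=; first by split=> // [[i [j [k [h1 h2 h3]]]]]; lia.
split.
- case/orP.
  + case/has2P => j [k [h1 h2 q]]; exists 0, j.+1, k.+1; split => //.
  + case/IH => i [j [k [h1 h2 h3 q]]]; exists i.+1, j.+1, k.+1; split => //.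
- case=> [[|i]] [[|j] [[|k] [h1 h2 h3 q]]] //.
  + by apply/orP; left; apply/has2P; exists j, k.
  + by apply/orP; right; apply/IH; exists i, j, k.
Qed.

Lemma c132 s : contains [:: 1; 3; 2] pred0 s = has3 (fun x y z => (x < z) && (z < y)) s.
Proof.
apply/idP/idP.
- case/contains3P => i [j [k [h1 h2 h3]]]; rewrite /cond3 /= => H.
  apply/has3P; exists i, j, k; split => //; lia.
- case/has3P => i [j [k [h1 h2 h3 q]]]; apply/contains3P; exists i, j, k; split => //.
  rewrite /cond3 /=; lia.
Qed.

Lemma c213 s : contains [:: 2; 1; 3] pred0 s = has3 (fun x y z => (y < x) && (x < z)) s.
Proof.
apply/idP/idP.
- case/contains3P => i [j [k [h1 h2 h3]]]; rewrite /cond3 /= => H.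
  apply/has3P; exists i, j, k; split => //; lia.
- case/has3P => i [j [k [h1 h2 h3 q]]]; apply/contains3P; exists i, j, k; split => //.
  rewrite /cond3 /=; lia.
Qed.


Lemma has2_cat Q s1 s2 : has2 Q (s1 ++ s2) =
  [|| has2 Q s1, has2 Q s2 | has (fun x => has (Q x) s2) s1].
Proof.
elim: s1 => [|x s1 IH] /=; first by rewrite orbF. rewrite has_cat IH.
by case: (has (Q x) s1); case: (has (Q x) s2); case: (has2 Q s1); case: (has2 Q s2);
   case: (has (fun x0 : nat => has (Q x0) s2) s1).
Qed.

Lemma has3_cat P s1 s2 : has3 P (s1 ++ s2) =
  [|| has3 P s1, has3 P s2, has (fun x => has2 (P x) s2) s1
    | has2 (fun x y => has (P x y) s2) s1].
Proof.
elim: s1 => [|x s1 IH] /=; first by case: (has3 P s2).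
rewrite has2_cat IH.
by case: (has2 (P x) s1); case: (has2 (P x) s2); case: (has (fun y => has (P x y) s2) s1);
   case: (has3 P s1); case: (has3 P s2); case: (has (fun x => has2 (P x) s2) s1);
   case: (has2 (fun x y => has (P x y) s2) s1).
Qed.

Lemma has2_mem Q s : has2 Q s -> exists x y, [/\ x \in s, y \in s & Q x y].
Proof.
case/has2P => i [j [h1 h2 q]]; exists (nth 0 s i), (nth 0 s j);
have hi : i < size s by lia.
by split => //; apply: mem_nth.
Qed.

Lemma pairwise_has2 (r : rel nat) s : pairwise r s = ~~ has2 (fun x y => ~~ r x y) s.
Proof.
elim: s => [|x s IH] //=; rewrite IH negb_or -all_predC; congr (_ && _).
by apply: eq_all => y /=; rewrite negbK.
Qed.

Lemma has3_rev P s : has3 P (rev s) = has3 (fun x y z => P z y x) s.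
Proof.
apply/idP/idP.
- case/has3P => i [j [k [h1 h2 h3]]]; rewrite size_rev in h3.
  rewrite !nth_rev; try lia.
  move=> q; apply/has3P; exists (size s - k.+1), (size s - j.+1), (size s - i.+1).
  split; try lia; done.
- case/has3P => i [j [k [h1 h2 h3 q]]]; apply/has3P.
  exists (size s - k.+1), (size s - j.+1), (size s - i.+1); rewrite size_rev.
  split; try lia.
  rewrite !nth_rev; try lia.
  have -> : size s - (size s - k.+1).+1 = k by lia.
  have -> : size s - (size s - j.+1).+1 = j by lia.
  have -> : size s - (size s - i.+1).+1 = i by lia.
  done.
Qed.

Lemma allrel_perm (r : rel nat) s1 s1' t t' :
  perm_eq s1 s1' -> perm_eq t t' -> allrel r s1 t = allrel r s1' t'.
Proof.
move=> p1 p2; rewrite /allrel (perm_all _ p1); apply: eq_all => x /=; exact: perm_all.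
Qed.

Section Gen.
Variable lt : rel nat.

Fixpoint gpush (x : nat) (st out : seq nat) : seq nat * seq nat :=
  match st with
  | [::] => ([:: x], out)
  | y :: st' => if lt y x then gpush x st' (rcons out y) else (x :: st, out)
  end.

Definition grun (xs : seq nat) (so : seq nat * seq nat) :=
  foldl (fun so x => gpush x so.1 so.2) so xs.

Definition G xs := (grun xs ([::], [::])).2 ++ (grun xs ([::], [::])).1.

Lemma gpush_out x st o :
  gpush x st o = ((gpush x st [::]).1, o ++ (gpush x st [::]).2).
Proof.
elim: st o => [|y st IH] o /=; first by rewrite cats0.
case: (lt y x) => /=; last by rewrite cats0.
by rewrite IH [in RHS]IH /= cat_rcons.
Qed.

Lemma grun_out xs st o :
  grun xs (st, o) = ((grun xs (st, [::])).1, o ++ (grun xs (st, [::])).2).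
Proof.
elim: xs st o => [|x xs IH] st o /=; first by rewrite cats0.
rewrite /grun /= -!/(grun _ _) gpush_out.
case: (gpush x st [::]) => st1 o1 /=.
by rewrite IH [in RHS]IH /= catA.
Qed.

Lemma gpush_perm x st o :
  perm_eq ((gpush x st o).2 ++ (gpush x st o).1) (o ++ x :: st).
Proof.
elim: st o => [|y st IH] o //=.
case: (lt y x) => //=.
apply: perm_trans (IH _) _; rewrite -cats1 -!catA perm_cat2l /=.
by rewrite (perm_catCA [:: y] [:: x] st).
Qed.

Lemma grun_perm xs so :
  perm_eq ((grun xs so).2 ++ (grun xs so).1) (so.2 ++ so.1 ++ xs).
Proof.
elim: xs so => [|x xs IH] [st o] /=; first by rewrite cats0.
rewrite /grun /= -/(grun _ _); apply: perm_trans (IH _) _.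
set p := gpush x st o.
have H := gpush_perm x st o.
rewrite catA; apply: perm_trans (_ : perm_eq _ ((o ++ x :: st) ++ xs)) _.
  by rewrite perm_cat2r.
by rewrite -!catA perm_cat2l (perm_catCA [:: x] st xs).
Qed.

Lemma G_perm xs : perm_eq (G xs) xs.
Proof. exact: (grun_perm xs ([::], [::])). Qed.

Lemma gpush_max m st o : (forall y, y \in st -> lt y m) -> gpush m st o = ([:: m], o ++ st).
Proof.
elim: st o => [|y st IH] o H /=; first by rewrite cats0.
have H' : forall z, z \in st -> lt z m by move=> z zs; apply: H; rewrite inE zs orbT.
by rewrite H ?mem_head // IH // cat_rcons.
Qed.

Lemma gpush_barrier x S b B o : ~~ lt b x ->
  gpush x (S ++ b :: B) o = ((gpush x S o).1 ++ b :: B, (gpush x S o).2).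
Proof.
move=> nb; elim: S o => [|y S IH] o /=; first by rewrite (negbTE nb).
by case: (lt y x).
Qed.

Lemma grun_barrier xs S b B o : (forall x, x \in xs -> ~~ lt b x) ->
  grun xs (S ++ b :: B, o) = ((grun xs (S, o)).1 ++ b :: B, (grun xs (S, o)).2).
Proof.
elim: xs S o => [|x xs IH] S o H //=.
rewrite /grun /= -!/(grun _ _) gpush_barrier ?H ?mem_head //.
rewrite IH; first by case: (gpush x S o).
by move=> z zs; apply: H; rewrite inE zs orbT.
Qed.

Lemma G_split L m R : (forall y, y \in L ++ R -> lt y m) -> (forall x, x \in R -> ~~ lt m x) ->
  G (L ++ m :: R) = G L ++ G R ++ [:: m].
Proof.
move=> H1 H2.
rewrite /G /grun foldl_cat /= -!/(grun _ _).
set SL := (grun L ([::], [::])).1. set OL := (grun L ([::], [::])).2.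
rewrite gpush_max; last first.
  move=> y ys; apply: H1; rewrite mem_cat.
  have : y \in OL ++ SL by rewrite mem_cat ys orbT.
  by rewrite (perm_mem (grun_perm L ([::], [::]))) => ->.
rewrite -[[:: m]]/([::] ++ [:: m]) grun_barrier // grun_out /=.
by rewrite -!catA.
Qed.

Hypothesis lt_irr : irreflexive lt.
Hypothesis lt_trans : transitive lt.
Hypothesis lt_total : forall x y, x != y -> lt x y || lt y x.

Definition P231 x y z := lt z x && lt x y.

Lemma exists_max s : s != [::] -> exists2 m, m \in s & forall y, y \in s -> y != m -> lt y m.
Proof.
elim: s => [|x s IH] // _.
case: (altP (s =P [::])) => [->|sn].
  by exists x => [|y]; rewrite ?mem_head // inE => /eqP ->; rewrite eqxx.
case: (IH sn) => m ms Hm.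
case: (altP (x =P m)) => [->|xm].
  exists m; first by rewrite mem_head.
  by move=> y; rewrite inE => /orP[/eqP -> |]; [rewrite eqxx | apply: Hm].
case/orP: (lt_total xm) => hxm.
  exists m; first by rewrite inE ms orbT.
  by move=> y; rewrite inE => /orP[/eqP -> //|]; apply: Hm.
exists x; first by rewrite mem_head.
move=> y; rewrite inE => /orP[/eqP -> |ys]; first by rewrite eqxx.
move=> yx; case: (altP (y =P m)) => [-> //|ym]; exact: lt_trans (Hm _ ys ym) hxm.
Qed.

Lemma split_avoid L m R : uniq (L ++ m :: R) -> (forall y, y \in L ++ R -> lt y m) ->
  ~~ has3 P231 (L ++ m :: R) = [&& ~~ has3 P231 L, ~~ has3 P231 R & allrel lt L R].
Proof.
move=> U H.
have HL : forall x, x \in L -> lt x m by move=> x xs; apply: H; rewrite mem_cat xs.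
have HR : forall x, x \in R -> lt x m by move=> x xs; apply: H; rewrite mem_cat xs orbT.
have asym : forall x y, lt x y -> lt y x -> False.
  by move=> x y h1 h2; have := lt_irr x; rewrite (lt_trans h1 h2).
have disj : forall x z, x \in L -> z \in R -> x != z.
  move=> x z xs zs; apply/eqP => exz; move: U; rewrite cat_uniq => /and3P[_ /hasPn /(_ z) + _].
  by rewrite inE zs orbT => /(_ isT); rewrite -exz xs.
rewrite has3_cat /=.
have E1 : has2 (P231 m) R = false.
  apply/negP => /has2_mem [y [z [ys zs /andP[_ h]]]]; exact: asym h (HR _ ys).
rewrite E1 /=.
apply/idP/idP.
- rewrite !negb_or => /and4P[-> -> hA _] /=.
  apply/allrelP => x z xs zs.
  have xz := disj _ _ xs zs.
  case/orP: (lt_total xz) => // hzx.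
  move/hasPn: hA => /(_ x xs) /=; rewrite negb_or => /andP[/hasPn /(_ z zs) /= + _].
  by rewrite /P231 hzx (HL _ xs).
- case/and3P => h1 h2 /allrelP h3.
  rewrite !negb_or h1 h2 /=; apply/andP; split.
  + apply/hasPn => x xs /=; rewrite negb_or; apply/andP; split.
      apply/hasPn => z zs; rewrite /P231 negb_and; apply/orP; left.
      by apply/negP => hzx; exact: asym hzx (h3 _ _ xs zs).
    apply/negP => /has2_mem [y [z [_ zs /andP[hzx _]]]]; exact: asym hzx (h3 _ _ xs zs).
  + apply/negP => /has2_mem [x [y [xs _ /=]]] /orP[/andP[hmx _] | /hasP[z zs /andP[hzx _]]].
      exact: asym hmx (HL _ xs).
    exact: asym hzx (h3 _ _ xs zs).
Qed.

Lemma knuth s : uniq s -> pairwise lt (G s) = ~~ has3 P231 s.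
Proof.
move: {2}(size s) (leqnn (size s)) => N; elim: N s => [|N IH] s.
  by rewrite leqn0 => /nilP -> _.
case: (altP (s =P [::])) => [-> //|sn] hs U.
case: (exists_max sn) => m ms Hm.
move: U hs Hm; case/splitPr: ms => L R U hs Hm.
have H1 : forall y, y \in L ++ R -> lt y m.
  move=> y ys; apply: Hm; first by move: ys; rewrite !mem_cat inE => /orP[->|->]; rewrite ?orbT.
  have nmL : m \notin L.
    move: U; rewrite cat_uniq => /and3P[_ HH _]; by move/hasPn: HH => /(_ m (mem_head _ _)).
  have nmR : m \notin R by move: U; rewrite cat_uniq => /and3P[_ _ /andP[]].
  by apply/eqP => eym; move: ys; rewrite eym mem_cat (negbTE nmL) (negbTE nmR).
have H2 : forall x, x \in R -> ~~ lt m x.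
  move=> x xs; apply/negP => h.
  have hx : lt x m by apply: H1; rewrite mem_cat xs orbT.
  by have := lt_irr m; rewrite (lt_trans h hx).
rewrite G_split // split_avoid //.
have UL : uniq L by move: U; rewrite cat_uniq => /andP[].
have UR : uniq R by move: U; rewrite cat_uniq => /and3P[_ _ /andP[]].
have sL : size L <= N by move: hs; rewrite size_cat /=; lia.
have sR : size R <= N by move: hs; rewrite size_cat /=; lia.
rewrite pairwise_cat pairwise_cat allrel_catr /= -(IH _ sL UL) -(IH _ sR UR).
rewrite (allrel_perm lt (G_perm L) (G_perm R)).
have -> : allrel lt (G L) [:: m] = true.
  apply/allrelP => x y; rewrite (perm_mem (G_perm L)) inE => xs /eqP ->.
  by apply: H1; rewrite mem_cat xs.
have -> : allrel lt (G R) [:: m] = true.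
  apply/allrelP => x y; rewrite (perm_mem (G_perm R)) inE => xs /eqP ->.
  by apply: H1; rewrite mem_cat xs orbT.
by rewrite /= andbT; case: (allrel lt L R); case: (pairwise lt (G L)); case: (pairwise lt (G R)).
Qed.

End Gen.


Notation c21 := (contains [:: 2; 1] pred0).
Notation c123 := (contains [:: 1; 2; 3] (pred1 0)).
Notation c321 := (contains [:: 3; 2; 1] (pred1 1)).

Lemma c21_cons y s : c21 s -> c21 (y :: s).
Proof. by case/c21P => i [j [h1 h2 h3]]; apply/c21P; exists i.+1, j.+1. Qed.

Lemma c123_cons y s : c123 s -> c123 (y :: s).
Proof. by case/c123P => i [k [h1 h2 h3 h4]]; apply/c123P; exists i.+1, k.+1. Qed.

Lemma c123_drop i s : ~~ c123 s -> ~~ c123 (drop i s).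
Proof.
elim: s i => [|y s IH] [|i] //= H; apply: IH; apply: contra H; exact: c123_cons.
Qed.

Lemma c21_single x : ~~ c21 [:: x].
Proof. by apply/negP => /c21P [i [j [h1 h2 _]]]; move: h2 => /= h2; lia. Qed.

Lemma c123_single x : ~~ c123 [:: x].
Proof. by apply/negP => /c123P [i [k [h1 h2 _]]]; move: h2 => /= h2; lia. Qed.

Lemma c21_cons2 x y st : ~~ c21 (y :: st) -> c21 (x :: y :: st) = (y < x).
Proof.
move=> A; apply/idP/idP.
- case/c21P => [[|i] [[|j] [h1 h2 h3]]] //.
  + move: h1 h2 h3; case: j => [|j] h1 h2 h3 //=.
    rewrite /= in h2 h3.
    rewrite ltnNge; apply/negP => hxy; apply: (negP A); apply/c21P.
    exists 0, j.+1; split => //=; lia.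
  + by case: (negP A); apply/c21P; exists i, j.
- by move=> h; apply/c21P; exists 0, 1.
Qed.

Lemma c123_cons2 x y st : ~~ c123 (y :: st) ->
  c123 (x :: y :: st) = (x < y) && has (fun z => y < z) st.
Proof.
move=> A; apply/idP/idP.
- case/c123P => [[|i] [k [h1 h2 h3 h4]]].
  + have [k' ek] : exists k', k = k'.+2 by exists (k-2); lia.
    subst k; rewrite /= in h2 h3 h4.
    rewrite h3 /=; apply/hasNP; exists k'; split => //.
  + have [k' ek] : exists k', k = k'.+1 by exists (k-1); lia.
    subst k; by case: (negP A); apply/c123P; exists i, k'.
- case/andP => h /hasNP [j [hj hz]]; apply/c123P; exists 0, j.+2; split => //.
Qed.

Lemma nthr s x i : i < size s -> nth 0 (rcons s x) i = nth 0 s i.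
Proof. by rewrite nth_rcons => ->. Qed.

Lemma nthr_last s x : nth 0 (rcons s x) (size s) = x.
Proof. by rewrite nth_rcons ltnn eqxx. Qed.

Lemma c321_rcons s x : c321 s -> c321 (rcons s x).
Proof.
case/c321P => i [j [h1 h2 h3 h4]]; apply/c321P; exists i, j.
rewrite size_rcons !nthr //; try lia; split => //; lia.
Qed.

Lemma c321_rcons2 a0 y x : ~~ c321 (rcons a0 y) ->
  c321 (rcons (rcons a0 y) x) = (x < y) && has (fun z => y < z) a0.
Proof.
move=> A; apply/idP/idP.
- case/c321P => i [j [h1 h2 h3 h4]].
  move: h2; rewrite !size_rcons => h2.
  have [hj|hj] : j.+1 < (size a0).+1 \/ j = size a0 by lia.
  + case: (negP A); apply/c321P; exists i, j.
    move: h3 h4; rewrite !(nthr (s := rcons a0 y)) ?size_rcons; try lia.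
    by move=> h3 h4; split => //; rewrite size_rcons.
  + subst j.
    have e1 : nth 0 (rcons (rcons a0 y) x) (size a0).+1 = x by rewrite -(size_rcons a0 y) nthr_last.
    have e2 : nth 0 (rcons (rcons a0 y) x) (size a0) = y by rewrite nthr ?size_rcons // nthr_last.
    have e3 : nth 0 (rcons (rcons a0 y) x) i = nth 0 a0 i by rewrite !nthr ?size_rcons //; lia.
    move: h3 h4; rewrite e1 e2 e3 => h3 h4; rewrite h3 /=; apply/hasNP; exists i; split => //.
- case/andP => h /hasNP [i [hi hz]]; apply/c321P; exists i, (size a0).
  have e1 : nth 0 (rcons (rcons a0 y) x) (size a0).+1 = x by rewrite -(size_rcons a0 y) nthr_last.
  have e2 : nth 0 (rcons (rcons a0 y) x) (size a0) = y by rewrite nthr ?size_rcons // nthr_last.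
  have e3 : nth 0 (rcons (rcons a0 y) x) i = nth 0 a0 i by rewrite !nthr ?size_rcons //; lia.
  rewrite e1 e2 e3 !size_rcons; split => //.
Qed.

Section Push.
Variable cont : seq nat -> bool.

Definition run (xs : seq nat) (so : seq nat * seq nat) :=
  foldl (fun so x => push cont x so.1 so.2) so xs.

Lemma SCE tau : SC cont tau = (run tau ([::], [::])).2 ++ (run tau ([::], [::])).1.
Proof. by rewrite /SC /run; case: (foldl _ _ _). Qed.

Lemma push_shape x st o : exists m, [/\ m <= size st,
  push cont x st o = (x :: drop m st, o ++ take m st),
  forall i, i < m -> cont (x :: drop i st) &
  m < size st -> ~~ cont (x :: drop m st)].
Proof.
elim: st o => [|y st IH] o /=.
  by exists 0; rewrite cats0; split.
case: ifP => hc.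
  case: (IH (rcons o y)) => m [h1 h2 h3 h4]; exists m.+1; split => //=.
  - by rewrite h2 cat_rcons.
  - by case=> [|i] //= hi; apply: h3.
by exists 0; rewrite cats0 hc; split.
Qed.

Lemma push_avoid x st o : ~~ cont [:: x] -> ~~ cont (push cont x st o).1.
Proof.
move=> hx; elim: st o => [|y st IH] o //=.
by case: ifP => hc //=; rewrite hc.
Qed.

Lemma push_perm x st o :
  perm_eq ((push cont x st o).2 ++ (push cont x st o).1) (o ++ x :: st).
Proof.
elim: st o => [|y st IH] o //=.
case: ifP => //= _.
apply: perm_trans (IH _) _; rewrite -cats1 -!catA perm_cat2l /=.
by rewrite (perm_catCA [:: y] [:: x] st).
Qed.

Lemma run_perm xs so :
  perm_eq ((run xs so).2 ++ (run xs so).1) (so.2 ++ so.1 ++ xs).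
Proof.
elim: xs so => [|x xs IH] [st o] /=; first by rewrite cats0.
rewrite /run /= -/(run _ _); apply: perm_trans (IH _) _.
have H := push_perm x st o.
rewrite catA; apply: perm_trans (_ : perm_eq _ ((o ++ x :: st) ++ xs)) _.
  by rewrite perm_cat2r.
by rewrite -!catA perm_cat2l (perm_catCA [:: x] st xs).
Qed.

Lemma run_avoid xs so : ~~ cont so.1 -> (forall x, ~~ cont [:: x]) -> ~~ cont (run xs so).1.
Proof.
move=> h1 h2; elim: xs so h1 => [|x xs IH] [st o] //= h1.
by apply: IH; apply: push_avoid.
Qed.

End Push.

Lemma run_rcons c xs x so : run c (rcons xs x) so = push c x (run c xs so).1 (run c xs so).2.
Proof. by rewrite /run foldl_rcons. Qed.

Lemma west_push x st o : ~~ c21 st -> push c21 x st o = gpush ltn x st o.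
Proof.
elim: st o => [|y st IH] o //= A.
rewrite c21_cons2 //; case: (y < x) => //; apply: IH.
by apply: contra A; exact: c21_cons.
Qed.

Lemma west_run xs st o : ~~ c21 st -> run c21 xs (st, o) = grun ltn xs (st, o).
Proof.
elim: xs st o => [|x xs IH] st o A //=.
rewrite /run /= -/(run _ _ _) west_push // /grun /= -/(grun _ _ _).
have := @push_avoid c21 x st o (c21_single x); rewrite west_push //.
by case: (gpush ltn x st o) => st' o' /= B; apply: IH.
Qed.

Lemma west_G s : west_s s = G ltn s.
Proof.
rewrite /west_s SCE west_run //.
by apply/negP => /c21P [i [j [h1 h2 _]]]; move: h2 => /= h2; lia.
Qed.

Definition gtr : rel nat := fun a b => b < a.

Lemma gpush_sub (lt : rel nat) x S o : {subset (gpush lt x S o).1 <= x :: S}.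
Proof.
elim: S o => [|y S IH] o /=; first by [].
case: ifP => _ z; last by [].
move/IH; rewrite !inE => /orP[->//|->]; by rewrite !orbT.
Qed.

Lemma phase2_push n B x S o : ~~ c123 (S ++ n :: B) -> all (fun y => y < n) S ->
  all (fun y => y <= n) B -> x < n ->
  push c123 x (S ++ n :: B) o = ((gpush gtr x S o).1 ++ n :: B, (gpush gtr x S o).2).
Proof.
move=> + + hB hx; elim: S o => [|y S IH] o /= A hS.
  rewrite c123_cons2 // hx /=.
  have -> : has (fun z => n < z) B = false.
    by apply/negP => /hasP [z zB]; move/allP: hB => /(_ z zB); lia.
  by [].
move/andP: hS => [hy hS].
rewrite c123_cons2 //.
have -> : has (fun z => y < z) (S ++ n :: B).
  by apply/hasP; exists n => //; rewrite mem_cat mem_head orbT.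
rewrite andbT /gtr; case: (x < y) => //.
apply: IH => //; apply: contra A; exact: c123_cons.
Qed.

Lemma phase2 n B xs S o : ~~ c123 (S ++ n :: B) -> all (fun y => y < n) S ->
  all (fun y => y <= n) B -> all (fun y => y < n) xs ->
  run c123 xs (S ++ n :: B, o) =
    ((grun gtr xs (S, o)).1 ++ n :: B, (grun gtr xs (S, o)).2).
Proof.
elim: xs S o => [|x xs IH] S o A hS hB hxs //=.
move/andP: hxs => [hx hxs].
rewrite /run /= -/(run _ _ _) phase2_push // /grun /= -/(grun _ _ _).
have C := @push_avoid c123 x (S ++ n :: B) o (c123_single x).
rewrite phase2_push // in C.
case E: (gpush gtr x S o) => [S' o'] /=.
apply: IH => //; first by move: C; rewrite E.
apply/allP => z zS'; have := @gpush_sub gtr x S o z; rewrite E /= => /(_ zS'); rewrite inE => /orP[/eqP ->//|zS].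
by move/allP: hS => /(_ z zS).
Qed.


Lemma c123_nil : ~~ c123 [::].
Proof. by apply/negP => /c123P [i [k [h1 h2 _]]]; move: h2 => /= h2; lia. Qed.

Lemma c321_nil : ~~ c321 [::].
Proof. by apply/negP => /c321P [i [k [h1 h2 _]]]; move: h2 => /= h2; lia. Qed.

Lemma c321_single x : ~~ c321 [:: x].
Proof. by apply/negP => /c321P [i [k [h1 h2 _]]]; move: h2 => /= h2; lia. Qed.

Notation run1 a := (run c123 a ([::], [::])).

Lemma run1_avoid a : ~~ c123 (run1 a).1.
Proof. apply: run_avoid; [exact: c123_nil | exact: c123_single]. Qed.

Lemma popped_gt x st m : ~~ c123 st -> m <= size st ->
  (forall i, i < m -> c123 (x :: drop i st)) -> all (fun y => x < y) (take m st).
Proof.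
move=> A hm H; apply/allP => y /(nthP 0) [i hi <-].
rewrite size_take in hi.
have him : i < m by move: hi; case: ifP => hh hi; lia.
have his : i < size st by lia.
rewrite nth_take //.
have := H i him; rewrite (drop_nth 0 his) c123_cons2; first by case/andP.
by rewrite -(drop_nth 0 his); apply: c123_drop.
Qed.

Lemma phase1_min a y : y \in (run1 a).2 -> exists2 w, w \in (run1 a).1 & w < y.
Proof.
elim/last_ind: a y => [|a' x IH] y //.
rewrite run_rcons.
case: (push_shape c123 x (run1 a').1 (run1 a').2) => m [hm -> h3 _] /=.
have A := run1_avoid a'.
have P := popped_gt A hm h3.
rewrite mem_cat => /orP[yo|yt].
- case: (IH y yo) => w ws hw.
  move: ws; rewrite -{1}(cat_take_drop m (run1 a').1) mem_cat => /orP[wt|wd].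
  + exists x; first by rewrite mem_head.
    by move/allP: P => /(_ w wt) hxw; lia.
  + by exists w => //; rewrite inE wd orbT.
- exists x; first by rewrite mem_head.
  by move/allP: P => /(_ y yt).
Qed.

Lemma phase1 a : ((run1 a).2 == [::]) = ~~ c321 a /\
  ((run1 a).2 = [::] -> (run1 a).1 = rev a).
Proof.
elim/last_ind: a => [|a' x [e1 e2]]; first by rewrite c321_nil.
rewrite run_rcons.
have A := run1_avoid a'.
case: (push_shape c123 x (run1 a').1 (run1 a').2) => m [hm -> h3 h4] /=.
case Eo: ((run1 a').2) => [|y0 o'].
- move: e1 e2; rewrite Eo eqxx => /esym e1 /(_ erefl) e2.
  rewrite e2 in hm h3 h4 A *.
  case: m hm h3 h4 => [|m] hm h3 h4.
  + rewrite take0 drop0 /= rev_rcons; split => //.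
    case/lastP E: a' e1 e2 h4 A => [|a0 y] e1 e2 h4 A.
      by rewrite eqxx; apply/esym; exact: c321_single.
    rewrite c321_rcons2; last by rewrite e1.
    rewrite rev_rcons /= in h4 A; move: h4 => /(_ isT).
    by rewrite c123_cons2 // has_rev => ->.
  + have hs : 0 < size (rev a') by lia.
    rewrite cat0s.
    have -> : (take m.+1 (rev a') == [::]) = false by case: (rev a') hs.
    split; last by case: (rev a') hs => [|z zs].
    case/lastP E: a' e1 e2 h3 A hs => [|a0 y] e1 e2 h3 A hs; first by [].
    have := h3 0 isT; rewrite drop0 rev_rcons c123_cons2; last by rewrite rev_rcons in A.
    rewrite has_rev => h; rewrite c321_rcons2; last by rewrite e1.
    by rewrite h.
- have -> : (y0 :: o' ++ take m (run1 a').1 == [::]) = false by [].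
  split => //.
  move: e1; rewrite Eo /= => /esym/negbFE h.
  by rewrite c321_rcons.
Qed.

Lemma gtr_irr : irreflexive gtr. Proof. exact: ltnn. Qed.
Lemma gtr_trans : transitive gtr. Proof. by move=> y x z; rewrite /gtr /=; lia. Qed.
Lemma gtr_total x y : x != y -> gtr x y || gtr y x. Proof. by rewrite /gtr /=; lia. Qed.
Lemma ltn_irr' : irreflexive ltn. Proof. exact: ltnn. Qed.
Lemma ltn_trans' : transitive ltn. Proof. by move=> y x z; lia. Qed.
Lemma ltn_total x y : x != y -> ltn x y || ltn y x. Proof. by move=> h /=; lia. Qed.

Lemma eq_has2 Q Q' s : (forall x y, Q x y = Q' x y) -> has2 Q s = has2 Q' s.
Proof.
move=> E; elim: s => [|x s IH] //=; rewrite IH; congr (_ || _); apply: eq_has => y; exact: E.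
Qed.

Lemma eq_has3 P P' s : (forall x y z, P x y z = P' x y z) -> has3 P s = has3 P' s.
Proof.
move=> E; elim: s => [|x s IH] //=; rewrite IH; congr (_ || _); apply: eq_has2 => y z; exact: E.
Qed.

Lemma pw_gtr_avoid s : pairwise gtr s -> ~~ has3 (P231 ltn) s.
Proof.
move=> pw; apply/negP => /has3P [i [j [k [h1 h2 h3 /andP[_ q]]]]].
move: pw; rewrite pairwise_has2 => /negP; apply; apply/has2P.
exists i, j; split => //; first by lia.
by rewrite /gtr; lia.
Qed.

Lemma D_pairwise b : uniq b -> ~~ has3 (P231 ltn) (G gtr b) -> pairwise gtr (G gtr b).
Proof.
case: (altP (b =P [::])) => [-> //|bn] U H.
case: (exists_max gtr_trans gtr_total bn) => m ms Hm.
move: U H Hm; case/splitPr: ms => L R U H Hm.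
have nmL : m \notin L.
  by move: U; rewrite cat_uniq => /and3P[_ HH _]; move/hasPn: HH => /(_ m (mem_head _ _)).
have nmR : m \notin R by move: U; rewrite cat_uniq => /and3P[_ _ /andP[]].
have H1 : forall y, y \in L ++ R -> gtr y m.
  move=> y ys; apply: Hm; first by move: ys; rewrite !mem_cat inE => /orP[->|->]; rewrite ?orbT.
  by apply/eqP => eym; move: ys; rewrite eym mem_cat (negbTE nmL) (negbTE nmR).
have H2 : forall x, x \in R -> ~~ gtr m x.
  move=> x xs; apply/negP => h.
  have hx : gtr x m by apply: H1; rewrite mem_cat xs orbT.
  by move: h hx; rewrite /gtr; lia.
rewrite G_split // in H *.
set X := G gtr L ++ G gtr R.
have HX : forall x, x \in X -> m < x.
  move=> x; rewrite mem_cat (perm_mem (G_perm gtr L)) (perm_mem (G_perm gtr R)) => xs.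
  by apply: H1; rewrite mem_cat.
have UX : uniq X.
  have : perm_eq X (L ++ R) by apply: perm_cat; apply: G_perm.
  move/perm_uniq => ->; move: U; rewrite !cat_uniq /= => /and3P[-> + /andP[_ ->]].
  by rewrite negb_or => /andP[_ ->].
rewrite catA -/X in H *.
rewrite pairwise_cat /= andbT.
have -> : allrel gtr X [:: m].
  by apply/allrelP => x y xs; rewrite inE => /eqP ->; rewrite /gtr; apply: HX.
rewrite /= pairwise_has2; apply/negP => /has2P [i [j [h1 h2 q]]].
move: H; rewrite has3_cat => /negP; apply; apply/orP; right; apply/orP; right; apply/orP; right.
apply/has2P; exists i, j; split => //.
have hi : i < size X by lia.
have ne : nth 0 X i != nth 0 X j by rewrite nth_uniq //; lia.
rewrite /= orbF /P231 /gtr in q *.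
have := HX _ (mem_nth 0 hi); move: q ne => /= q ne hm; apply/andP; split => /=; lia.
Qed.

Lemma D_avoid b : uniq b ->
  ~~ has3 (P231 ltn) (G gtr b) = ~~ contains [:: 2; 1; 3] pred0 b.
Proof.
move=> U.
have E : has3 (fun x y z => (y < x) && (x < z)) b = has3 (P231 gtr) b.
  by apply: eq_has3 => x y z; rewrite /P231 /gtr /= andbC.
rewrite c213 E.
rewrite -(knuth gtr_irr gtr_trans gtr_total U).
apply/idP/idP; [exact: D_pairwise | exact: pw_gtr_avoid].
Qed.


Lemma run_cat c xs ys so : run c (xs ++ ys) so = run c ys (run c xs so).
Proof. by rewrite /run foldl_cat. Qed.

Theorem mainTheorem12 (n : nat) (tau a b : seq nat) :
  0 < n -> perm_eq tau (iota 1 n) -> tau = a ++ n :: b ->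
  (in_Sort_12_3 n tau <->
   [/\ all (fun x => all (fun y => y < x) b) a,
       avoids [:: 3; 2; 1] (pred1 1) a /\ avoids [:: 1; 3; 2] pred0 a &
       avoids [:: 2; 1; 3] pred0 b]).
Proof.
move=> n0 Hp Et.
have Ut : uniq tau by rewrite (perm_uniq Hp) iota_uniq.
have Hmem : forall x, x \in tau -> x <= n by move=> x; rewrite (perm_mem Hp) mem_iota; lia.
have Ua : uniq (a ++ n :: b) by rewrite -Et.
have nna : n \notin a.
  by move: Ua; rewrite cat_uniq => /and3P[_ HH _]; move/hasPn: HH => /(_ n (mem_head _ _)).
have nnb : n \notin b by move: Ua; rewrite cat_uniq => /and3P[_ _ /andP[]].
have Ha : all (fun y => y < n) a.
  apply/allP => y ya; have : y <= n by apply: Hmem; rewrite Et mem_cat ya.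
  have : y != n by apply/eqP => e; move: ya; rewrite e (negbTE nna).
  lia.
have Hb : all (fun y => y < n) b.
  apply/allP => y yb; have : y <= n by apply: Hmem; rewrite Et mem_cat inE yb !orbT.
  have : y != n by apply/eqP => e; move: yb; rewrite e (negbTE nnb).
  lia.
have Ub : uniq b by move: Ua; rewrite cat_uniq => /and3P[_ _ /andP[]].
set st1 := (run1 a).1. set o1 := (run1 a).2.
have Pa : perm_eq (o1 ++ st1) a := run_perm c123 a ([::], [::]).
have Hst1 : all (fun y => y < n) st1.
  apply/allP => y ys; move/allP: Ha; apply.
  by rewrite -(perm_mem Pa) mem_cat ys orbT.
have Ho1 : all (fun y => y < n) o1.
  apply/allP => y ys; move/allP: Ha; apply.
  by rewrite -(perm_mem Pa) mem_cat ys.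
have A1 : ~~ c123 st1 := run1_avoid a.
have Hpush : push c123 n st1 o1 = (n :: st1, o1).
  case: (push_shape c123 n st1 o1) => m [hm -> h3 _].
  case: m hm h3 => [|m] hm h3; first by rewrite drop0 take0 cats0.
  exfalso; have := h3 0 isT; rewrite drop0.
  case E: st1 hm A1 Hst1 => [|y st'] //= _ A1' /andP[hy _].
  rewrite c123_cons2; last exact: A1'.
  by rewrite ltnNge (ltnW hy).
have Hsig : SC_12_3 tau = o1 ++ G gtr b ++ n :: st1.
  rewrite /SC_12_3 SCE Et run_cat /= -/st1 -/o1.
  have A2 : ~~ c123 ([::] ++ n :: st1).
    have := @push_avoid c123 n st1 o1 (c123_single n); by rewrite Hpush.
  have B2 : all (fun y => y <= n) st1.
    by apply/allP => y ys; apply: ltnW; move/allP: Hst1; apply.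
  rewrite Hpush -[n :: st1]/([::] ++ n :: st1) (@phase2 n st1 b [::] o1 A2 isT B2 Hb).
  rewrite grun_out /G.
  by rewrite -!catA.
have Psig : perm_eq (SC_12_3 tau) tau.
  by rewrite /SC_12_3 SCE; apply: (perm_trans (run_perm _ _ _)).
have Usig : uniq (SC_12_3 tau) by rewrite (perm_uniq Psig).
have key : in_Sort_12_3 n tau <-> ~~ has3 (P231 ltn) (SC_12_3 tau).
  rewrite /in_Sort_12_3 west_G -(knuth ltn_irr' ltn_trans' ltn_total Usig).
  split.
  - by case=> _ ->; rewrite -sorted_pairwise ?iota_ltn_sorted //; exact: ltn_trans.
  - move=> H; split => //; apply: (pairwise_eq (r := ltn)) => //.
    + by move=> x y /andP[h1 h2]; move: (ltn_trans h1 h2); rewrite ltnn.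
    + by rewrite -sorted_pairwise ?iota_ltn_sorted //; exact: ltn_trans.
    + by apply: perm_trans (G_perm _ _) _; apply: perm_trans Psig Hp.
rewrite key Hsig.
have HDn : forall y, y \in G gtr b ++ rev a -> ltn y n.
  move=> y; rewrite mem_cat (perm_mem (G_perm gtr b)) mem_rev => /orP[] ys.
    by move/allP: Hb => /(_ y ys).
  by move/allP: Ha => /(_ y ys).
have Ha' : perm_eq (rev a) a by rewrite perm_rev.
have Hrev : has3 (P231 ltn) (rev a) = contains [:: 1; 3; 2] pred0 a.
  by rewrite c132 has3_rev.
have [e1 e2] := phase1 a.
split.
- move=> H.
  have o1nil : o1 = [::].
    case E: o1 => [|y o'] //; exfalso.
    have yo : y \in o1 by rewrite E mem_head.
    case: (phase1_min yo) => w ws hw.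
    move/negP: H; apply; rewrite has3_cat; apply/orP; right; apply/orP; right; apply/orP; left.
    apply/hasP; exists y => //; rewrite has2_cat; apply/orP; right; apply/orP; left.
    rewrite /=; apply/orP; left; apply/hasP; exists w => //.
    by rewrite /P231 /= hw /=; move/allP: Ho1 => /(_ y yo).
  move: e1; rewrite -/o1 o1nil eqxx => /esym e1.
  have e2' := e2 o1nil; rewrite -/st1 in e2'.
  have U' : uniq (G gtr b ++ n :: rev a) by move: Usig; rewrite Hsig o1nil e2'.
  move: H; rewrite o1nil e2' cat0s (@split_avoid ltn ltn_irr' ltn_trans' ltn_total (G gtr b) n (rev a) U' HDn).
  case/and3P => hD hA hR.
  split.
  + rewrite (allrel_perm ltn (G_perm gtr b) Ha') in hR.
    apply/allP => x xa; apply/allP => y yb; exact: (allrelP hR y x yb xa).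
  + by split; [rewrite /avoids e1 | rewrite /avoids -Hrev].
  + by rewrite /avoids -(D_avoid Ub).
- case=> h1 [h2a h2b] h3.
  have o1nil : o1 = [::] by apply/eqP; rewrite /o1 e1.
  have e2' := e2 o1nil; rewrite -/st1 in e2'.
  have U' : uniq (G gtr b ++ n :: rev a) by move: Usig; rewrite Hsig o1nil e2'.
  rewrite o1nil e2' cat0s (@split_avoid ltn ltn_irr' ltn_trans' ltn_total (G gtr b) n (rev a) U' HDn).
  rewrite /avoids in h2a h2b h3.
  rewrite (D_avoid Ub) h3 /= Hrev h2b /=.
  rewrite (allrel_perm ltn (G_perm gtr b) Ha').
  apply/allrelP => y x yb xa; move/allP: h1 => /(_ x xa) /allP /(_ y yb); done.
Qed.
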